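(* Let $m,n\ge 2$ be integers and let $\mathcal{A}\in T_{m,n}$. If $\mathcal{A}$ is a nonzero genuinely positive definite tensor, then $-\mathcal{A}$ is not a genuinely positive definite tensor. If $\mathcal{A}$ is a barren tensor, then $-\mathcal{A}$ is also a barren tensor.
   Context: $T_{m,n}$ denotes the set of real $m$th order $n$-dimensional cubic tensors $\mathcal{A}=(a_{i_1\dots i_m})$, $i_1,\dots,i_m\in\{1,\dots,n\}$. For $\mathcal{A}\in T_{m,n}$, $\mathrm{Sym}(\mathcal{A})$ is the unique symmetric tensor $\mathcal{B}$ (entries invariant under permutation of indices) with $\mathcal{B}\mathbf{x}^m=\mathcal{A}\mathbf{x}^m$ for all $\mathbf{x}\in\mathbb{R}^n$, where $\mathcal{A}\mathbf{x}^m=\sum_{i_1,\dots,i_m}a_{i_1\dots i_m}x_{i_1}\cdots x_{i_m}$. For $\mathbf{x}$, $\mathcal{A}\mathbf{x}^{m-1}$ is the vector with $i$th component $\sum_{i_2,\dots,i_m}a_{ii_2\dots i_m}x_{i_2}\cdots x_{i_m}$, and $\mathbf{x}^{[m-1]}=(x_i^{m-1})_i$. A real number $\lambda$ is an H-eigenvalue of $\mathcal{A}$ if there is a nonzero $\mathbf{x}\in\mathbb{R}^n$ with $\mathcal{A}\mathbf{x}^{m-1}=\lambda\mathbf{x}^{[m-1]}$. $\mathcal{A}$ is genuinely positive definite if $\mathrm{Sym}(\mathcal{A})$ has at least one H-eigenvalue and all its H-eigenvalues are positive. $\mathcal{A}$ is a barren tensor if $\mathrm{Sym}(\mathcal{A})$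 has no H-eigenvalue. *)

(* Defs.v *)
From mathcomp Require Import all_boot all_order all_algebra all_fingroup.
From mathcomp Require Import reals.
Set Implicit Arguments. Unset Strict Implicit. Unset Printing Implicit Defensive.
Import Order.TTheory GRing.Theory Num.Theory.
Local Open Scope ring_scope.

(* A real m-th order n-dimensional cubic tensor: entries indexed by
   functions i : 'I_m -> 'I_n, i.e. (i_1,...,i_m). *)
Definition tensor (R : realType) (m n : nat) := {ffun 'I_m -> 'I_n} -> R.

Definition tneg (R : realType) m n (A : tensor R m n) : tensor R m n :=
  fun idx => - A idx.

Definition tsym (R : realType) m n (A : tensor R m n) : tensor R m n :=
  fun idx => (m`!%:R)^-1 * \sum_(s : 'S_m) A [ffun k => idx (s k)].

(* A x^{m-1}: i-th component is sum over (i_2,...,i_m) of a_{i i_2..i_m} x_{i_2}..x_{i_m};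
   the first index is the ordinal with value 0. *)
Definition tapply (R : realType) m n (A : tensor R m n) (x : 'I_n -> R) (i : 'I_n) : R :=
  \sum_(idx : {ffun 'I_m -> 'I_n} | [forall k : 'I_m, (val k == 0%N) ==> (idx k == i)])
     A idx * \prod_(k : 'I_m | val k != 0%N) x (idx k).

Definition H_eigenvalue (R : realType) m n (A : tensor R m n) (lambda : R) : Prop :=
  exists x : 'I_n -> R, (exists j, x j != 0) /\
    forall i, tapply A x i = lambda * x i ^+ m.-1.

Definition genuinely_positive_definite (R : realType) m n (A : tensor R m n) : Prop :=
  (exists lambda, H_eigenvalue (tsym A) lambda) /\
  (forall lambda, H_eigenvalue (tsym A) lambda -> 0 < lambda).

Definition barren (R : realType) m n (A : tensor R m n) : Prop :=
  forall lambda, ~ H_eigenvalue (tsym A) lambda.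

(* Main.v *)
Require Import Defs.
From mathcomp Require Import all_boot all_order all_algebra all_fingroup.
From mathcomp Require Import reals.
Import Order.TTheory GRing.Theory Num.Theory.
Local Open Scope ring_scope.

Lemma tsym_neg (R : realType) m n (A : tensor R m n) idx :
  tsym (tneg A) idx = - tsym A idx.
Proof.
rewrite /tsym /tneg -mulrN -sumrN; congr (_ * _); by [].
Qed.

Lemma eig_neg (R : realType) m n (B C : tensor R m n) l :
  (forall idx, C idx = - B idx) -> H_eigenvalue B l -> H_eigenvalue C (- l).
Proof.
move=> HC [x [Hx Hi]]; exists x; split => // i.
have -> : tapply C x i = - tapply B x i.
  rewrite /tapply -sumrN; apply: eq_bigr => idx _; by rewrite HC mulNr.
by rewrite Hi mulNr.
Qed.

Theorem proposition2p1 (R : realType) (m n : nat) (hm : (2 <= m)%N) (hn : (2 <= n)%N)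
  (A : tensor R m n) :
  ((exists idx, A idx != 0) -> genuinely_positive_definite A ->
     ~ genuinely_positive_definite (tneg A)) /\
  (barren A -> barren (tneg A)).
Proof.
split.
- move=> _ [[l Hl] Hpos] [_ Hneg].
  have Hl' := @eig_neg _ _ _ _ _ _ (@tsym_neg _ _ _ A) Hl.
  have := Hneg _ Hl'; have := Hpos _ Hl.
  move=> h1; rewrite oppr_gt0 => h2.
  by have := lt_trans h2 h1; rewrite ltxx.
- move=> Hb l Hl; apply: (Hb (- l)).
  have HC : forall idx, tsym A idx = - tsym (tneg A) idx.
    by move=> idx; rewrite tsym_neg opprK.
  exact: (@eig_neg _ _ _ (tsym (tneg A)) (tsym A) l HC Hl).
Qed.
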